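(* Let $K\ge1$, fix $a_2,\dots,a_{K+1}\ge0$, and for $x\ge0$ let $G(x)=P^{(1)}_{K+1}(x,a_2,\dots,a_{K+1})$. Let $\mathcal A_\theta$ be an $L$-layer MinAgg GNN with exactly $K$ message passing layers $\ell_1<\dots<\ell_K$ and with 1-dimensional aggregation. Let $D$ be the set of all $x\ge0$ such that $\mathcal A_\theta$ is not path derived on $G(x)$, and $Y=\{h^{(L)}_{v_{K+1}}(G(x)):x\in D\}$. Then $|Y|\le K$.
   Context: Attributed graphs have nonnegative edge weights and node features, a self-loop of weight $0$ at each node, and $\mathcal N(v)=\{v\}\cup\{u:\{u,v\}\in E\}$. A large constant $\beta>0$ encodes ''infinite distance''. For a source $s$, $\mathrm d^{(t)}(s,v)$ is the minimal weight of a walk from $s$ to $v$ with at most $t$ edges ($\beta$ if none). $P^{(t)}_k(a_1,\dots,a_k)$: path $v_0,\dots,v_k$, edge $\{v_{i-1},v_i\}$ of weight $a_i$, features $x_{v_i}=\mathrm d^{(t)}(v_0,v_i)$. MinAgg GNN: for each $\ell\in[L]$, $m$-layer ReLU MLPs ($x^{(j)}=\sigma(W_jx^{(j-1)}+b_j)$) $f^{\mathrm{agg},(\ell)}:\mathbb R^{d_{\ell-1}+1}\to\mathbb R^d$ and $f^{\mathrm{up},(\ell)}:\mathbb R^{d+d_{\ell-1}}\to\mathbb R^{d_\ell}$ with weight matrices $W^{\mathrm{agg},(\ell)}_j$, $W^{\mathrm{up},(\ell)}_j$; $d_0=d_L=1$, $d_\ell=d$ otherwise; $h^{(0)}_v=x_v$,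 $h^{(\ell)}_v=f^{\mathrm{up},(\ell)}\big(\min_{u\in\mathcal N(v)}f^{\mathrm{agg},(\ell)}(h^{(\ell-1)}_u\oplus x_{(u,v)})\oplus h^{(\ell-1)}_v\big)$ (coordinatewise min, $\oplus$ concatenation). A function on $\mathbb R^n_{\ge0}$ depends on a set $S$ of coordinates if some $x\ne y$ agreeing outside $S$ have different images; layer $\ell$ is message passing if $f^{\mathrm{agg},(\ell)}$ depends on its node component (first $d_{\ell-1}$ input coordinates). $\mathcal A_\theta$ has 1-dimensional aggregation if for every message passing layer $\ell_k$ the first weight matrix $W^{\mathrm{up},(\ell_k)}_1$ of $f^{\mathrm{up},(\ell_k)}$ has exactly one nonzero entry. $\mathcal A_\theta$ is path derived on $P^{(1)}_{K+1}(a_1,\dots,a_{K+1})$ if for every $k\in[K]$, $$h^{(\ell_k)}_{v_{k+1}}=f^{\mathrm{up},(\ell_k)}\Big(f^{\mathrm{agg},(\ell_k)}\big(h^{(\ell_k-1)}_{v_k}\oplus x_{(v_k,v_{k+1})}\big)\oplus h^{(\ell_k-1)}_{v_{k+1}}\Big).$$ *)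

(* Defs.v *)
From HB Require Import structures.
From mathcomp Require Import all_boot all_order all_algebra.
From mathcomp Require Import reals.
Unset Printing Implicit Defensive.
Import Order.TTheory GRing.Theory Num.Theory.
Local Open Scope ring_scope.

Inductive mlp (R : Type) : nat -> nat -> Type :=
| MLPnil n : mlp R n n
| MLPcons n k p : 'M[R]_(k, n) -> 'cV[R]_k -> mlp R k p -> mlp R n p.
Arguments MLPnil {R n}.
Arguments MLPcons {R n k p}.

Definition relu {R : numDomainType} {k} (v : 'cV[R]_k) : 'cV[R]_k :=
  map_mx (fun t => Num.max t 0) v.

Fixpoint mlp_apply {R : numDomainType} {n p} (f : mlp R n p) : 'cV[R]_n -> 'cV[R]_p :=
  match f in mlp _ n p return 'cV[R]_n -> 'cV[R]_p with
  | MLPnil _ => fun x => x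
  | MLPcons _ _ _ W b f' => fun x => mlp_apply f' (relu (W *m x + b))
  end.

Fixpoint mlp_depth {R n p} (f : mlp R n p) : nat :=
  match f with
  | MLPnil _ => 0%N
  | MLPcons _ _ _ _ _ f' => (mlp_depth f').+1
  end.

Definition first_weight_one_nonzero {R : numDomainType} {n p} (f : mlp R n p) : Prop :=
  match f with
  | MLPnil _ => False
  | MLPcons n k _ W _ _ => #|[set ij : 'I_k * 'I_n | W ij.1 ij.2 != 0]| = 1%N
  end.

(* f^{agg} : R^{n+1} -> R^p depends on its node component (first n coordinates),
   as a function on nonnegative vectors: some x <> y, agreeing on the last
   (edge) coordinate, have different images. *)
Definition depends_on_node {R : numDomainType} {n p} (f : mlp R (n + 1) p) : Prop :=
  exists x y : 'cV[R]_(n + 1),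
    (forall i, 0 <= x i 0) /\ (forall i, 0 <= y i 0) /\
    x <> y /\ dsubmx x = dsubmx y /\ mlp_apply f x <> mlp_apply f y.

Definition gdim (L d l : nat) : nat := if (l == 0%N) || (l == L) then 1%N else d.

Definition minv {R : realDomainType} {k} (a b : 'cV[R]_k) : 'cV[R]_k :=
  \matrix_(i, j) Num.min (a i j) (b i j).

Section GNN.
Variables (R : realDomainType) (N : nat) (adj : rel 'I_N)
  (ew : 'I_N -> 'I_N -> R) (* edge features x_{(u,v)} (0 on self-loops) *)
  (feat : 'I_N -> R)
  (L d : nat)
  (agg : forall l : nat, mlp R (gdim L d l.-1 + 1) d)
  (upd : forall l : nat, mlp R (d + gdim L d l.-1) (gdim L d l)).

Definition aggmin (msg : 'I_N -> 'cV[R]_d) (v : 'I_N) : 'cV[R]_d :=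
  foldr (@minv R d) (msg v) [seq msg u | u <- enum 'I_N & adj u v].

Fixpoint hgnn (l : nat) : 'I_N -> 'cV[R]_(gdim L d l) :=
  match l return 'I_N -> 'cV[R]_(gdim L d l) with
  | 0%N => fun v => const_mx (feat v)
  | l'.+1 => fun v =>
      mlp_apply (upd l'.+1)
        (col_mx (aggmin (fun u => mlp_apply (agg l'.+1)
                                   (col_mx (hgnn l' u) (const_mx (ew u v)))) v)
                (hgnn l' v))
  end.
End GNN.
Arguments hgnn {R N} adj ew feat L d agg upd l v.
Arguments aggmin {R N} adj d msg v.

Section Dist.
Variables (R : realDomainType) (N : nat) (adj : rel 'I_N)
  (ew : 'I_N -> 'I_N -> R) (beta : R).

Definition walk_rel : rel 'I_N := fun u v => (u == v) || adj u v.

(* weights of all walks from s to v with at most t edges *)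
Definition walk_weights (t : nat) (s v : 'I_N) : seq R :=
  flatten [seq [seq \sum_(e <- pairmap ew s (val p)) e
               | p <- enum {: k.-tuple 'I_N}
               & path walk_rel s (val p) && (last s (val p) == v)]
          | k <- iota 0 t.+1].

Definition dist (t : nat) (s v : 'I_N) : R :=
  match walk_weights t s v with
  | [::] => beta
  | w :: ws => foldr Num.min w ws
  end.
End Dist.
Arguments dist {R N} adj ew beta t s v.

(* nodes v_0,...,v_{K+1} = 'I_(K.+2); edge {v_{i-1},v_i} has weight a i *)
Definition path_adj (K : nat) : rel 'I_(K.+2) :=
  fun u v => ((val u).+1 == val v) || ((val v).+1 == val u).

Definition path_ew {R : realDomainType} (K : nat) (a : nat -> R)
  (u v : 'I_(K.+2)) : R :=
  if u == v then 0 else a (maxn u v).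

Definition Gweights {R : realDomainType} (a : nat -> R) (x : R) : nat -> R :=
  fun i => if i == 1%N then x else a i.

Definition path_feat {R : realDomainType} (K : nat) (a : nat -> R) (beta : R)
  (v : 'I_(K.+2)) : R :=
  dist (path_adj K) (path_ew K a) beta 1 ord0 v.

Definition hG {R : realDomainType} (K : nat) (a : nat -> R) (beta x : R)
  {L d : nat} agg upd (l : nat) (v : 'I_(K.+2)) : 'cV[R]_(gdim L d l) :=
  @hgnn R K.+2 (path_adj K) (path_ew K (Gweights a x))
    (path_feat K (Gweights a x) beta) L d agg upd l v.

(* A_theta is path derived on G(x), for message passing layers ls 1 < ... < ls K *)
Definition path_derived {R : realDomainType} (K : nat) (a : nat -> R) (beta x : R)
  {L d : nat} (agg : forall l : nat, mlp R (gdim L d l.-1 + 1) d)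
  (upd : forall l : nat, mlp R (d + gdim L d l.-1) (gdim L d l))
  (ls : nat -> nat) : Prop :=
  forall k : nat, (1 <= k <= K)%N ->
    hG K a beta x agg upd (ls k) (inord k.+1) =
    mlp_apply (upd (ls k))
      (col_mx (mlp_apply (agg (ls k))
                 (col_mx (hG K a beta x agg upd (ls k).-1 (inord k))
                         (const_mx (path_ew K (Gweights a x) (inord k) (inord k.+1)))))
              (hG K a beta x agg upd (ls k).-1 (inord k.+1))).

(* Main.v *)
Require Import Defs.
From HB Require Import structures.
From mathcomp Require Import all_boot all_order all_algebra.
From mathcomp Require Import reals.
From mathcomp Require Import zify.
From Stdlib Require Import Classical.
Import Order.TTheory GRing.Theory Num.Theory.
Local Open Scope ring_scope.

Lemma mlp_nonneg (R : realDomainType) n p (f : mlp R n p) (z : 'cV[R]_n) :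
  ((0 < mlp_depth f)%N \/ (forall i, 0 <= z i 0)) -> forall i, 0 <= mlp_apply f z i 0.
Proof.
elim: f z => [n0|n0 k p0 W b f' IH] z /=.
  by case=> // H.
move=> _; apply: IH; right=> i; rewrite /relu mxE.
by rewrite le_max lexx orbT.
Qed.

Lemma mlp_one_coord (R : numDomainType) n p (f : mlp R n p) :
  first_weight_one_nonzero f ->
  exists j0 : 'I_n, forall z z' : 'cV[R]_n, z j0 0 = z' j0 0 -> mlp_apply f z = mlp_apply f z'.
Proof.
case: f => [n0|n0 k p0 W b f'] //= Hc.
have /cards1P [[i0 j0] Hs] : #|[set ij : 'I_k * 'I_n0 | W ij.1 ij.2 != 0]| == 1%N by rewrite Hc.
exists j0 => z z' Hz; congr (mlp_apply f' (relu (_ + b))).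
apply/matrixP => i j; rewrite !mxE; apply: eq_bigr => j1 _.
have [->|Hj] := eqVneq j1 j0; first by rewrite (ord1 j) Hz.
have : (i, j1) \notin [set ij : 'I_k * 'I_n0 | W ij.1 ij.2 != 0].
  by rewrite Hs in_set1 xpair_eqE negb_and Hj orbT.
by rewrite inE negbK => /eqP ->; rewrite !mul0r.
Qed.

Lemma foldr_minv_entry (R : realDomainType) (T : Type) d (msg : T -> 'cV[R]_d) a s i j :
  (foldr (@minv R d) (msg a) (map msg s)) i j =
  foldr Num.min (msg a i j) (map (fun u => msg u i j) s).
Proof. by elim: s => //= u s IH; rewrite mxE IH. Qed.

Lemma foldr_min_mem (R : realDomainType) (a : R) l : foldr Num.min a l \in a :: l.
Proof.
elim: l => [|b l IH] /=; first by rewrite mem_seq1.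
rewrite minEle; case: ifP => _; first by rewrite !inE eqxx orbT.
by move: IH; rewrite !inE => /orP [->|->]; rewrite ?orbT.
Qed.

Lemma foldr_min_le (R : realDomainType) (a : R) l y : y \in a :: l -> foldr Num.min a l <= y.
Proof.
elim: l => [|b l IH] /=; first by rewrite mem_seq1 => /eqP ->.
rewrite !inE ge_min => /orP [/eqP Ey|/orP [/eqP ->|H]].
- by subst y; rewrite IH ?orbT // mem_head.
- by rewrite lexx.
- by rewrite IH ?orbT // inE H orbT.
Qed.

Lemma min_indep (R : realDomainType) (T : eqType) (f g : T -> R) (a w : T) (s : seq T) :
  (forall u, u \in a :: s -> u != w -> f u = g u) ->
  foldr Num.min (f a) (map f s) != f w -> foldr Num.min (g a) (map g s) != g w ->
  foldr Num.min (f a) (map f s) = foldr Num.min (g a) (map g s).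
Proof.
move=> Hfg Hf Hg.
have := foldr_min_mem _ (f a) (map f s); rewrite -/(map f (a :: s)) => /mapP [u Hu Eu].
have := foldr_min_mem _ (g a) (map g s); rewrite -/(map g (a :: s)) => /mapP [u' Hu' Eu'].
have Huw : u != w by apply: contraNneq Hf => <-; rewrite Eu.
have Huw' : u' != w by apply: contraNneq Hg => <-; rewrite Eu'.
apply/eqP; rewrite eq_le; apply/andP; split.
  rewrite Eu' -Hfg //; apply: foldr_min_le; rewrite -/(map f (a :: s)); exact: map_f.
rewrite Eu Hfg //; apply: foldr_min_le; rewrite -/(map g (a :: s)); exact: map_f.
Qed.

Lemma aggmin_congr (R : realDomainType) N (adj : rel 'I_N) d (msg msg' : 'I_N -> 'cV[R]_d) v :
  (forall u, (u == v) || adj u v -> msg u = msg' u) ->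
  aggmin adj d msg v = aggmin adj d msg' v.
Proof.
move=> H; rewrite /aggmin (H v) ?eqxx //; congr foldr.
apply/eq_in_map => u; rewrite mem_filter => /andP [Ha _]; apply: H; by rewrite Ha orbT.
Qed.

Lemma col_mx_nonneg (R : numDomainType) m n (A : 'cV[R]_m) (B : 'cV[R]_n) :
  (forall i, 0 <= A i 0) -> (forall i, 0 <= B i 0) -> forall i, 0 <= col_mx A B i 0.
Proof.
move=> HA HB i; rewrite -(splitK i); case: (split i) => j /=.
  by rewrite col_mxEu.
by rewrite col_mxEd.
Qed.

Lemma pairmap_nonneg (R : realDomainType) N (r : rel 'I_N) (ew : 'I_N -> 'I_N -> R) s p :
  (forall u v, r u v -> 0 <= ew u v) -> path r s p -> forall e, e \in pairmap ew s p -> 0 <= e.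
Proof.
move=> Hr; elim: p s => [|y p IH] s //= /andP [Hsy Hp] e.
by rewrite inE => /orP [/eqP ->|He]; [exact: Hr | exact: IH He].
Qed.

Lemma ww_nonneg (R : realDomainType) N (adj : rel 'I_N) (ew : 'I_N -> 'I_N -> R) t s v :
  (forall u w, walk_rel N adj u w -> 0 <= ew u w) ->
  forall r, r \in walk_weights R N adj ew t s v -> 0 <= r.
Proof.
move=> Hew r /flattenP [rs /mapP [k _ ->]] /mapP [p]; rewrite mem_filter.
move=> /andP [/andP [Hp _] _] ->; rewrite big_seq; apply: sumr_ge0 => e He.
exact: (pairmap_nonneg _ _ _ _ _ _ Hew Hp).
Qed.

Lemma dist_nonneg (R : realDomainType) N (adj : rel 'I_N) (ew : 'I_N -> 'I_N -> R) beta t s v :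
  0 < beta -> (forall u w, walk_rel N adj u w -> 0 <= ew u w) -> 0 <= dist adj ew beta t s v.
Proof.
move=> Hb Hew; rewrite /dist.
have := @ww_nonneg R N adj ew t s v Hew.
case: (walk_weights _ _ _ _ _ _ _) => [|w ws] H; first exact: ltW.
by apply: H; apply: foldr_min_mem.
Qed.

Lemma ww_nil (R : realDomainType) K (ew : 'I_(K.+2) -> 'I_(K.+2) -> R) (j : 'I_(K.+2)) :
  (2 <= j)%N -> walk_weights R K.+2 (path_adj K) ew 1 ord0 j = [::].
Proof.
move=> Hj; rewrite /walk_weights /=.
rewrite (eq_filter (a2 := pred0)) ?filter_pred0.
  rewrite (eq_filter (a2 := pred0)) ?filter_pred0 //.
  case=> [[|p0 [|? ?]] //= Hs].
  rewrite andbT /walk_rel /path_adj.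
  apply/negP => /andP [H1 /eqP E2]; subst p0; move: H1 Hj.
  rewrite -(inj_eq val_inj) /=; case: j => j' /= _; lia.
case=> [[|? ?] //= Hs] /=.
by apply/negP => /eqP E; move: Hj; rewrite -E.
Qed.

Lemma pathew_nonneg (R : realDomainType) K (a : nat -> R) x (u v : 'I_(K.+2)) :
  0 <= x -> (forall i, (2 <= i <= K.+1)%N -> 0 <= a i) ->
  walk_rel K.+2 (path_adj K) u v -> 0 <= path_ew K (Gweights a x) u v.
Proof.
move=> Hx Ha; rewrite /walk_rel /path_ew; case: eqP => //= Huv Hadj.
rewrite /Gweights; case: eqP => // Hn; apply: Ha.
move: Hadj Hn; rewrite /path_adj; case: u {Huv} => u Hu; case: v => v Hv /=.
move=> /orP [/eqP E|/eqP E] Hn; apply/andP; split; lia.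
Qed.

Lemma ew_eq (R : realDomainType) K (a : nat -> R) x x' (u v : 'I_(K.+2)) :
  (2 <= v)%N -> path_ew K (Gweights a x) u v = path_ew K (Gweights a x') u v.
Proof.
move=> Hv; rewrite /path_ew; case: eqP => // _.
rewrite /Gweights; case: eqP => // E; exfalso; move: E Hv; lia.
Qed.

Lemma nbr K (u v : 'I_(K.+2)) : (u == v) || path_adj K u v ->
  [\/ nat_of_ord u = v, (u.+1 = v)%N | (v.+1 = u)%N].
Proof.
rewrite /path_adj -(inj_eq val_inj) /=.
by move=> /orP [/eqP ->|/orP [/eqP ->|/eqP ->]]; [apply: Or31|apply: Or32|apply: Or33].
Qed.

Lemma fw_depth (R : realDomainType) n p (f : mlp R n p) : first_weight_one_nonzero f -> (0 < mlp_depth f)%N.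
Proof. by case: f. Qed.

Section Main.
Variables (R : realType) (K : nat) (a : nat -> R) (beta : R) (L d m : nat)
  (agg : forall l : nat, mlp R (gdim L d l.-1 + 1) d)
  (upd : forall l : nat, mlp R (d + gdim L d l.-1) (gdim L d l))
  (ls : nat -> nat).
Hypotheses (HK : (1 <= K)%N) (Hb : 0 < beta)
  (Ha : forall i, (2 <= i <= K.+1)%N -> 0 <= a i)
  (Hdepth : forall l, (1 <= l <= L)%N -> mlp_depth (agg l) = m /\ mlp_depth (upd l) = m)
  (Hls : forall k, (1 <= k <= K)%N -> (1 <= ls k <= L)%N)
  (Hinc : forall k, (1 <= k < K)%N -> (ls k < ls k.+1)%N)
  (Hdep : forall l, (1 <= l <= L)%N ->
     (depends_on_node (agg l) <-> exists2 k, (1 <= k <= K)%N & l = ls k))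
  (H1d : forall k, (1 <= k <= K)%N -> first_weight_one_nonzero (upd (ls k))).

Local Notation H x l v := (hG K a beta x agg upd l v).

Lemma ls_mono i j : (1 <= i)%N -> (i <= j)%N -> (j <= K)%N -> (ls i <= ls j)%N.
Proof.
move=> Hi; elim: j => [|j IH] Hij HjK; first lia.
move: Hij; rewrite leq_eqVlt => /orP [/eqP -> //|Hlt].
have := IH Hlt (ltnW HjK); have := Hinc j; lia.
Qed.

Lemma ls_smono i j : (1 <= i)%N -> (i < j)%N -> (j <= K)%N -> (ls i < ls j)%N.
Proof.
move=> Hi Hij HjK; have := ls_mono i.+1 j; have := Hinc i; lia.
Qed.

Lemma m_pos : (0 < m)%N.
Proof.
have Hk : (1 <= 1 <= K)%N by rewrite HK.
have := fw_depth _ _ _ _ (H1d 1 Hk).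
by rewrite (Hdepth (ls 1) (Hls 1 Hk)).2.
Qed.

Lemma H_nonneg (x : R) : 0 <= x -> forall l, (l <= L)%N -> forall (v : 'I_(K.+2)) i, 0 <= H x l v i 0.
Proof.
move=> Hx [|l] HlL v i.
  rewrite /hG /= mxE; apply: dist_nonneg => // u w; exact: pathew_nonneg.
rewrite /hG /=; apply: mlp_nonneg; left.
by rewrite (Hdepth l.+1 _).2 ?m_pos // HlL.
Qed.

Definition msg (x : R) l (u v : 'I_(K.+2)) :=
  mlp_apply (agg l.+1) (col_mx (H x l u) (const_mx (path_ew K (Gweights a x) u v))).

Lemma H_step (x : R) l (v : 'I_(K.+2)) : H x l.+1 v =
  mlp_apply (upd l.+1) (col_mx (aggmin (path_adj K) d (fun u => msg x l u v) v) (H x l v)).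
Proof. by []. Qed.

Lemma step_congr (x x' : R) l (v : 'I_(K.+2)) : H x l v = H x' l v ->
  (forall u, (u == v) || path_adj K u v -> msg x l u v = msg x' l u v) ->
  H x l.+1 v = H x' l.+1 v.
Proof.
move=> Hv Hm; rewrite !H_step Hv; congr (mlp_apply _ (col_mx _ _)).
exact: aggmin_congr.
Qed.

Lemma msg_b (x x' : R) l (u v : 'I_(K.+2)) : 0 <= x -> 0 <= x' -> (l.+1 <= L)%N ->
  ~ (exists2 k, (1 <= k <= K)%N & l.+1 = ls k) -> (2 <= v)%N ->
  (u == v) || path_adj K u v -> msg x l u v = msg x' l u v.
Proof.
move=> Hx Hx' HlL Hnmp Hv Hu.
have Hnd : ~ depends_on_node (agg l.+1) by move/(Hdep l.+1 HlL).
rewrite /msg (ew_eq _ _ _ x x' u v Hv).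
set e := path_ew K (Gweights a x') u v.
have He : 0 <= e by apply: pathew_nonneg.
case: (eqVneq (mlp_apply (agg l.+1) (col_mx (H x l u) (const_mx e)))
              (mlp_apply (agg l.+1) (col_mx (H x' l u) (const_mx e)))) => // Hne.
exfalso; apply: Hnd.
exists (col_mx (H x l u) (const_mx e)), (col_mx (H x' l u) (const_mx e)).
split; first by apply: col_mx_nonneg => i; rewrite ?mxE //; apply: H_nonneg => //; exact: ltnW.
split; first by apply: col_mx_nonneg => i; rewrite ?mxE //; apply: H_nonneg => //; exact: ltnW.
split; first by move=> E; move: Hne; rewrite E eqxx.
by rewrite !col_mxKd; split => // E; move: Hne; rewrite E eqxx.
Qed.


Lemma Ninv (x x' : R) : 0 <= x -> 0 <= x' -> forall l, (l <= L)%N ->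
  forall j : 'I_(K.+2), (2 <= j)%N -> (l < ls j.-1)%N -> H x l j = H x' l j.
Proof.
move=> Hx Hx'; elim=> [|l IH] HlL j Hj Hlj.
  by rewrite /hG /= /path_feat /dist !ww_nil.
apply: step_congr; first by apply: IH => //; lia.
move=> u Hu.
have [[k' Hk' Ek']|Hnmp] := classic (exists2 k, (1 <= k <= K)%N & l.+1 = ls k); last first.
  exact: msg_b.
rewrite /msg (ew_eq _ _ _ x x' u j Hj) (IH _ u) //; last first.
- have := ls_mono j.-1 k'; have := ls_mono k' u.-1.
  have := ltn_ord j; have := ltn_ord u; have := nbr _ _ _ Hu.
  case=> E; lia.
- have := ls_mono j.-1 k'.
  have := ltn_ord j; have := ltn_ord u; have := nbr _ _ _ Hu.
  case=> E; lia.
- lia.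
Qed.

Definition fails (x : R) k := ~ (
    H x (ls k) (inord k.+1) =
    mlp_apply (upd (ls k))
      (col_mx (mlp_apply (agg (ls k))
                 (col_mx (H x (ls k).-1 (inord k))
                         (const_mx (path_ew K (Gweights a x) (inord k) (inord k.+1)))))
              (H x (ls k).-1 (inord k.+1)))).


Lemma fail_step (x x' : R) k : 0 <= x -> 0 <= x' -> (1 <= k <= K)%N ->
  fails x k -> fails x' k ->
  (forall j : 'I_(K.+2), (k < j)%N -> ((j <= K)%N -> ((ls k).-1 < ls j)%N) ->
     H x (ls k).-1 j = H x' (ls k).-1 j) ->
  H x (ls k) (inord k.+1) = H x' (ls k) (inord k.+1).
Proof.
move=> Hx Hx' Hk Hfx Hfx' IHj.
have Hlk := Hls k Hk.
have Hsm : forall u, (k < u)%N -> (u <= K)%N -> (ls k < ls u)%N.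
  by move=> u ? ?; apply: ls_smono => //; lia.
have H1 := H1d k Hk.
move: Hfx Hfx' IHj H1 Hlk Hsm; rewrite /fails.
move: (ls k) => [|l] //= Hfx Hfx' IHj H1 _ Hsm.
set v : 'I_(K.+2) := inord k.+1.
have Ev : nat_of_ord v = k.+1 by rewrite /v inordK //; lia.
have [j0 Hj0] := mlp_one_coord _ _ _ _ H1.
have Hv : H x l v = H x' l v by apply: IHj; rewrite Ev // => ?; have := Hsm k.+1; lia.
case: (splitP j0) => [i Ei|i Ei].
- have Ej0 : j0 = lshift _ i by apply: val_inj.
  have Ek : nat_of_ord (inord k : 'I_(K.+2)) = k by rewrite inordK //; lia.
  have Af : forall y, (mlp_apply (upd l.+1)
      (col_mx (aggmin (path_adj K) d (fun u => msg y l u v) v) (H y l v)) <>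
    mlp_apply (upd l.+1) (col_mx (msg y l (inord k) v) (H y l v))) ->
    (aggmin (path_adj K) d (fun u => msg y l u v) v) i 0 != msg y l (inord k) v i 0.
    move=> y Hfy; apply/eqP => E; apply: Hfy; apply: Hj0; by rewrite Ej0 !col_mxEu.
  have Ax := Af x Hfx; have Ax' := Af x' Hfx'.
  apply: Hj0; rewrite Ej0 !col_mxEu.
  move: Ax Ax'; rewrite /aggmin !foldr_minv_entry; apply: min_indep.
  move=> u Hu Hne.
  have Hu' : (u == v) || path_adj K u v.
    by move: Hu; rewrite inE mem_filter => /orP [->|/andP [->]]; rewrite ?orbT.
  have Euk : nat_of_ord u <> k by move=> E; move: Hne; rewrite -(inj_eq val_inj) /= E Ek eqxx.
  rewrite /msg (ew_eq _ _ _ x x' u v) ?Ev //.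
  have Hl : H x l u = H x' l u.
    apply: IHj.
    + have := nbr _ _ _ Hu'; rewrite Ev; case=> E; lia.
    + move=> HuK; have := Hsm u; have := nbr _ _ _ Hu'; rewrite Ev; case=> E; lia.
  by move: Hl => /= ->.
  + have := nbr _ _ _ Hu'; rewrite Ev; case=> E; lia.
- exfalso; apply: Hfx; rewrite -/v; apply: Hj0.
  have Ej0 : j0 = rshift _ i by apply: val_inj.
  by rewrite Ej0 !col_mxEd.
Qed.


Lemma Ginv (x x' : R) k : 0 <= x -> 0 <= x' -> (1 <= k <= K)%N ->
  fails x k -> fails x' k -> forall n, ((ls k).-1 + n <= L)%N ->
  forall j : 'I_(K.+2), (k < j)%N -> ((j <= K)%N -> ((ls k).-1 + n < ls j)%N) ->
  H x ((ls k).-1 + n) j = H x' ((ls k).-1 + n) j.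
Proof.
move=> Hx Hx' Hk Hfx Hfx'.
have Hlk := Hls k Hk.
elim=> [|n IH] HnL j Hkj Hj.
  rewrite addn0; apply: Ninv => //; try lia.
  have := ls_mono k j.-1; have := ltn_ord j; lia.
case: (boolP ((n == 0%N) && (nat_of_ord j == k.+1))) => [/andP [/eqP En /eqP Ej]|Hns].
  subst n.
  have -> : j = inord k.+1 by apply: val_inj; rewrite /= inordK -Ej // ltn_ord.
  have E : ((ls k).-1 + 1)%N = ls k by lia.
  rewrite E; apply: fail_step => // j' Hj' Hj'K.
  have := IH _ j' Hj'; rewrite addn0; apply; [lia | by []].
rewrite addnS; apply: step_congr.
  by apply: IH => //; lia.
move=> u Hu.
have Hj2 : (2 <= j)%N by lia.
have [[k' Hk' Ek']|Hnmp] := classic (exists2 k0, (1 <= k0 <= K)%N & ((ls k).-1 + n).+1 = ls k0); last first.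
  by apply: msg_b => //; rewrite -addnS.
rewrite /msg (ew_eq _ _ _ x x' u j Hj2).
have Hl : H x ((ls k).-1 + n) u = H x' ((ls k).-1 + n) u.
  apply: IH; first lia.
  + have := ls_mono k' k; have := ls_mono k k'; have := ls_smono k k'; have := ls_smono k' k.
    have := ls_mono k' j.-1; have := ls_mono j k'.
    have := ltn_ord j; have := ltn_ord u; move: Hns; rewrite negb_and.
    have := nbr _ _ _ Hu; case=> E; lia.
  + have := ls_mono k' j.-1; have := ls_mono k' u; have := ls_mono j u; have := ls_mono j k'.
    have := ltn_ord j; have := ltn_ord u.
    have := nbr _ _ _ Hu; case=> E; lia.
by move: Hl => /= ->.
Qed.

End Main.

Theorem mainTheorem12 (R : realType) (K : nat) (a : nat -> R) (beta : R)
  (L d m : nat)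
  (agg : forall l : nat, mlp R (gdim L d l.-1 + 1) d)
  (upd : forall l : nat, mlp R (d + gdim L d l.-1) (gdim L d l))
  (ls : nat -> nat) :
  (1 <= K)%N ->
  0 < beta ->
  (forall i, (2 <= i <= K.+1)%N -> 0 <= a i) ->
  (* every f^{agg,(l)}, f^{up,(l)} is an m-layer ReLU MLP *)
  (forall l, (1 <= l <= L)%N -> mlp_depth (agg l) = m /\ mlp_depth (upd l) = m) ->
  (* exactly K message passing layers ls 1 < ... < ls K *)
  (forall k, (1 <= k <= K)%N -> (1 <= ls k <= L)%N) ->
  (forall k, (1 <= k < K)%N -> (ls k < ls k.+1)%N) ->
  (forall l, (1 <= l <= L)%N ->
     (depends_on_node (agg l) <-> exists2 k, (1 <= k <= K)%N & l = ls k)) ->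
  (* 1-dimensional aggregation *)
  (forall k, (1 <= k <= K)%N -> first_weight_one_nonzero (upd (ls k))) ->
  (* |Y| <= K *)
  exists Y : seq 'cV[R]_(gdim L d L),
    (size Y <= K)%N /\
    forall x : R, 0 <= x -> ~ path_derived K a beta x agg upd ls ->
      hG K a beta x agg upd L (inord K.+1) \in Y.
Proof.
move=> HK Hb Ha Hdepth Hls Hinc Hdep H1d.
have G := Ginv R K a beta L d m agg upd ls HK Hb Ha Hdepth Hls Hinc Hdep H1d.
set F := fails R K a beta L d agg upd ls.
set out := fun x => hG K a beta x agg upd L (inord K.+1).
have Hout : forall x x' k, 0 <= x -> 0 <= x' -> (1 <= k <= K)%N -> F x k -> F x' k ->
    out x = out x'.
  move=> x x' k Hx Hx' Hk Hf Hf'.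
  have Hlk := Hls k Hk.
  have E : ((ls k).-1 + (L - (ls k).-1))%N = L by lia.
  have EK : nat_of_ord (inord K.+1 : 'I_(K.+2)) = K.+1 by rewrite inordK.
  move: (G x x' k Hx Hx' Hk Hf Hf' (L - (ls k).-1)%N (eq_leq E) (inord K.+1)).
  rewrite EK E; apply; first lia.
  by move=> HK'; exfalso; lia.
have Hind : forall n, (n <= K)%N -> exists Y : seq 'cV[R]_(gdim L d L),
    (size Y <= n)%N /\ forall x, 0 <= x -> (exists2 k, (1 <= k <= n)%N & F x k) -> out x \in Y.
  elim=> [|n IH] Hn.
    by exists [::]; split=> // x _ [k Hk _]; exfalso; lia.
  have [Y [HY HYin]] := IH (ltnW Hn).
  case: (classic (exists x, 0 <= x /\ F x n.+1)) => [[x0 [Hx0 Hf0]]|Hno].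
    exists (out x0 :: Y); split=> [/=|x Hx [k Hk Hf]]; first lia.
    have [Ek|Nk] := eqVneq k n.+1.
      subst k; rewrite (Hout x x0 n.+1) ?mem_head //; lia.
    by rewrite inE HYin ?orbT //; exists k => //; lia.
  exists Y; split=> [|x Hx [k Hk Hf]]; first lia.
  have [Ek|Nk] := eqVneq k n.+1.
    by subst k; exfalso; apply: Hno; exists x.
  by apply: HYin => //; exists k => //; lia.
have [Y [HY HYin]] := Hind K (leqnn K).
exists Y; split=> // x Hx Hnd; apply: HYin => //.
apply: NNPP => Hne; apply: Hnd => k Hk; apply: NNPP => Hnot; apply: Hne; by exists k.
Qed.
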